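(* Let $E$ be a finite-dimensional real Euclidean space with translation space $V$, and let $\Phi_{\mathrm{aff}}$ be an affine root system on $E$ with a chosen chamber $C$ and corresponding basis $B$. Let $J\subset B$ be such that $DJ=\{Da\mid a\in J\}$ is linearly independent. Then there exists a basis $B_J$ of the affine root system $(\Phi_{\mathrm{aff}})_J$ on $E_J$ with $J\subset B_J$.
   Context: Affine root systems are in the sense of Macdonald: a set of affine-linear functions on $E$. For an affine root $a$, $Da\in V^*$ is its gradient: $a(x+v)=a(x)+(Da)(v)$. Set $V^J=\{v\in V\mid \alpha(v)=0\ \forall\alpha\in DJ\}$, $E_J=E/V^J$, an affine space with translation space $V/V^J$, given the inner product transported from the orthogonal complement $(V^J)^\perp$ via the isomorphism $(V^J)^\perp\to V/V^J$. Let $(\Phi_{\mathrm{aff}})_J=\{a\in\Phi_{\mathrm{aff}}\mid Da\in\mathbb R\cdot DJ\}$; its elements are constant along $V^J$ and hence are affine functions on $E_J$, and $(\Phi_{\mathrm{aff}})_J$ is an affine root system on $E_J$. *)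

(* Defs.v *)
From HB Require Import structures.
From mathcomp Require Import all_boot all_order all_algebra.
From mathcomp Require Import all_classical all_reals all_analysis.
Set Implicit Arguments. Unset Strict Implicit. Unset Printing Implicit Defensive.
Import Order.TTheory GRing.Theory Num.Theory.
Import numFieldNormedType.Exports.
Local Open Scope classical_set_scope.
Local Open Scope ring_scope.

(* Model: the Euclidean affine space E is R^n = 'rV[R]_n with the standard
   inner product (origin chosen).  A "Euclidean space" on which an affine root
   system lives is a linear subspace W of R^n, given as a set; an affine
   function on W is represented uniquely by a pair (g, c) with gradient g in W
   (V^* identified with V through the inner product) and constant c:
   x |-> <g, x> + c. *)

Section AffineRootSystems.
Variables (R : realType) (n : nat).

Definition vec := 'rV[R]_n.
Definition aff := (vec * R)%type.

Definition dot (u v : vec) : R := \sum_(i < n) u ord0 i * v ord0 i.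

Definition aeval (a : aff) (x : vec) : R := dot a.1 x + a.2.

Definition cpair (a b : aff) : R := 2 * dot a.1 b.1 / dot a.1 a.1.

Definition refl (a : aff) (x : vec) : vec :=
  x - (2 * aeval a x / dot a.1 a.1) *: a.1.

(* action of s_a on affine functions: (s_a b) = b o s_a^{-1} = b o s_a
   = b - <a^vee, b> a *)
Definition refl_aff (a b : aff) : aff :=
  (b.1 - cpair a b *: a.1, b.2 - cpair a b * a.2).

Definition weyl (S : set aff) : set (vec -> vec) :=
  [set w | exists s : seq aff, (forall a, a \in s -> S a) /\
           w = foldr (fun a f => refl a \o f) id s].

Definition span_set (X : set vec) : set vec :=
  [set v | exists s : seq vec, (forall u, u \in s -> X u) /\ v \in vector.span s].

Definition lin_indep (X : set vec) : Prop :=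
  forall s : seq vec, uniq s -> (forall u, u \in s -> X u) -> free s.

Definition affine_root_system (W : set vec) (S : set aff) : Prop :=
  [/\
      (forall a, S a -> W a.1 /\ a.1 != 0),
      (forall (v : vec) (c : R), W v -> exists (s : seq aff) (k : nat -> R),
          (forall a, a \in s -> S a) /\
          v = \sum_(i < size s) k i *: (nth (0, 0) s i).1 /\
          c = \sum_(i < size s) k i * (nth (0, 0) s i).2),
      (forall a b, S a -> S b -> S (refl_aff a b)),
      (forall a b, S a -> S b -> cpair a b \is a Num.int) &
      (forall K : set vec, K `<=` W -> compact K ->
          finite_set [set w | weyl S w /\ exists2 x, K x & K (w x)])].

Definition regular_set (W : set vec) (S : set aff) : set vec :=
  W `\` [set x | exists2 a, S a & aeval a x = 0].

Definition chamber (W : set vec) (S : set aff) (C : set vec) : Prop :=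
  exists2 x, regular_set W S x & C = connected_component (regular_set W S) x.

Definition is_wall (W : set vec) (C : set vec) (a : aff) : Prop :=
  exists x, [/\ W x, aeval a x = 0 &
    exists2 e : R, 0 < e & forall y, W y -> aeval a y = 0 -> ball x e y ->
                                closure C y].

Definition basis_of_chamber (W : set vec) (S : set aff) (C : set vec) : set aff :=
  [set a | [/\ S a, is_wall W C a, (forall x, C x -> 0 < aeval a x) &
             ~ S (2^-1 *: a.1, a.2 / 2)]].

Definition grads (J : set aff) : set vec := fst @` J.

(* E_J = E / V^J is identified isometrically with (V^J)^perp = span DJ *)
Definition E_J (J : set aff) : set vec := span_set (grads J).

(* (Phi_aff)_J = {a in Phi_aff | Da in R.DJ}, as affine functions on E_J *)
Definition restr_sys (S : set aff) (J : set aff) : set aff :=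
  [set a | S a /\ span_set (grads J) a.1].

End AffineRootSystems.

(* Main.v *)
Require Import Defs.
From HB Require Import structures.
From mathcomp Require Import all_boot all_order all_algebra.
From mathcomp Require Import all_classical all_reals all_analysis.
From mathcomp Require Import zify.
Set Implicit Arguments. Unset Strict Implicit. Unset Printing Implicit Defensive.
Import Order.TTheory GRing.Theory Num.Theory.
Import numFieldNormedType.Exports.
Local Open Scope classical_set_scope.

Section Proj.
Local Open Scope ring_scope.
Variables (R : realType) (n : nat) (s : seq (vec R n)).
Hypothesis Hf : free s.

Definition Mx : 'M[R]_(size s, n) := \matrix_(i < size s) s`_i.
Definition Gx : 'M[R]_(size s) := Mx *m (trmx Mx).
Definition Ax : 'M[R]_n := Mx^T *m invmx Gx *m Mx.
Definition Px (x : vec R n) : vec R n := x *m Ax.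

Lemma dotE (u v : vec R n) : dot u v = (u *m v^T) ord0 ord0.
Proof. by rewrite /dot !mxE; apply: eq_bigr => j _; rewrite !mxE. Qed.

Lemma Mx_free (u : 'rV[R]_(size s)) : u *m Mx = 0 -> u = 0.
Proof.
rewrite mulmx_sum_row => H.
have /(@freeP _ _ _ (in_tuple s)) Hs := Hf.
apply/rowP => i; rewrite [RHS]mxE.
have := Hs (fun i => u 0 i); apply.
rewrite -[X in _ = X]H; apply: eq_bigr => j _; by rewrite rowK.
Qed.

Lemma Gx_unit : Gx \in unitmx.
Proof.
rewrite -row_free_unit; apply: inj_row_free => v Hv.
apply: Mx_free.
set w := v *m Mx.
have H0 : (w *m w^T) ord0 ord0 = 0.
  by rewrite /w trmx_mul mulmxA -(mulmxA v) -/Gx Hv mul0mx mxE.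
rewrite mxE in H0.
apply/rowP => j; rewrite [RHS]mxE.
have Hpos : forall i : 'I_n, predT i -> 0 <= w 0 i * w^T i 0.
  move=> i _; rewrite [X in _ * X]mxE; have := sqr_ge0 (w 0 i); by rewrite expr2.
have := @psumr_eq0P _ _ predT (fun j => w 0 j * w^T j 0) Hpos H0 j isT.
rewrite [X in _ * X]mxE => /eqP; rewrite mulf_eq0 orbb => /eqP ->; done.
Qed.

Lemma Ax_tr : Ax^T = Ax.
Proof.
by rewrite /Ax !trmx_mul trmxK trmx_inv /Gx trmx_mul trmxK !mulmxA.
Qed.

Lemma Px_M (u : 'rV[R]_(size s)) : Px (u *m Mx) = u *m Mx.
Proof.
rewrite /Px /Ax !mulmxA -(mulmxA u Mx) -/Gx -(mulmxA u Gx).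
by rewrite mulmxV ?Gx_unit // mulmx1.
Qed.

Lemma span_Mx y : y \in (vector.span s) -> exists u, y = u *m Mx.
Proof.
move=> /(@coord_span _ _ _ (in_tuple s)) ->.
exists (\row_i coord (in_tuple s) i y).
rewrite mulmx_sum_row; apply: eq_bigr => i _; by rewrite rowK mxE.
Qed.

Lemma Mx_span (u : 'rV[R]_(size s)) : u *m Mx \in (vector.span s).
Proof.
rewrite mulmx_sum_row; apply: memv_suml => i _; apply: memvZ.
by rewrite rowK; apply: memv_span; apply: mem_nth.
Qed.

Lemma Px_id y : y \in (vector.span s) -> Px y = y.
Proof. by move=> /span_Mx [u ->]; rewrite Px_M. Qed.

Lemma Px_in x : Px x \in (vector.span s).
Proof. by rewrite /Px /Ax !mulmxA Mx_span. Qed.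

Lemma Px_dot g x : g \in (vector.span s) -> dot g (Px x) = dot g x.
Proof.
move=> Hg; rewrite !dotE /Px trmx_mul Ax_tr mulmxA.
by rewrite -/(Px g) Px_id.
Qed.

Lemma PxD x y : Px (x + y) = Px x + Px y.
Proof. by rewrite /Px mulmxDl. Qed.
Lemma PxB x y : Px (x - y) = Px x - Px y.
Proof. by rewrite /Px mulmxBl. Qed.

End Proj.

Section Cont.
Local Open Scope ring_scope.
Variables (R : realType).

Lemma sum_cont (T : topologicalType) (V : normedModType R) (I : Type) (r : seq I)
  (F : I -> T -> V) : (forall i, continuous (F i)) ->
  continuous (fun x => \sum_(i <- r) F i x).
Proof.
move=> HF; elim: r => [|i r IH].
  have -> : (fun x => \sum_(i <- [::]) F i x) = fun=> 0.
    by apply: funext => x; rewrite big_nil.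
  exact: cst_continuous.
have -> : (fun x => \sum_(j <- i :: r) F j x) = fun x => F i x + \sum_(j <- r) F j x.
  by apply: funext => x; rewrite big_cons.
by move=> x; apply: continuousD; [apply: HF | apply: IH].
Qed.

Lemma dot_cont n (g : vec R n) : continuous (fun x : vec R n => dot g x).
Proof.
rewrite /dot; apply: sum_cont => j x.
apply: continuousM; first exact: cst_continuous.
exact: coord_continuous.
Qed.

Lemma Px_cont n (s : seq (vec R n)) : continuous (@Px R n s).
Proof.
have -> : @Px R n s = fun x => \sum_i (x *m ((Mx s)^T *m invmx (Gx s))) 0 i *: row i (Mx s).
  by apply: funext => x; rewrite /Px /Ax mulmxA mulmx_sum_row.
apply: sum_cont => i x; apply: continuousZr_tmp.
have -> : (fun x0 : vec R n => (x0 *m ((Mx s)^T *m invmx (Gx s))) 0 i) =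
  fun x0 => \sum_j x0 0 j * ((Mx s)^T *m invmx (Gx s)) j i.
  by apply: funext => y; rewrite mxE.
apply: sum_cont => j y; apply: continuousM; last exact: cst_continuous.
exact: coord_continuous.
Qed.

End Cont.
Section Aux.
Local Open Scope ring_scope.
Variables (R : realType) (n : nat).

Lemma dotD (g u v : vec R n) : dot g (u + v) = dot g u + dot g v.
Proof. by rewrite /dot -big_split; apply: eq_bigr => j _; rewrite !mxE mulrDr. Qed.

Lemma dotB (g u v : vec R n) : dot g (u - v) = dot g u - dot g v.
Proof.
rewrite /dot -sumrB; apply: eq_bigr => j _; by rewrite !mxE mulrBr.
Qed.

Lemma aeval_cont (a : aff R n) : continuous (aeval a).
Proof.
move=> x; apply: continuousD; [exact: dot_cont | exact: cst_continuous].
Qed.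

Lemma exists_basis (X : set (vec R n)) : lin_indep X ->
  exists s, [/\ free s, (forall u, u \in s -> X u) &
                (forall x, X x -> x \in vector.span s)].
Proof.
move=> HX.
suff H : forall m (s : seq (vec R n)),
    (\dim (fullv : {vspace vec R n}) - size s <= m)%N -> uniq s ->
    (forall u, u \in s -> X u) ->
    exists s, [/\ free s, (forall u, u \in s -> X u) &
                (forall x, X x -> x \in vector.span s)].
  by apply: (H _ [::]) => //; rewrite subn0.
elim=> [|m IH] s Hm Hu Hs; have Fs := HX s Hu Hs;
  (case: (pselect (forall x, X x -> x \in vector.span s)) => [Hall|Hn];
    [by exists s|]);
  (have [x [Xx xn]] : exists x, X x /\ x \notin vector.span s by
    apply: contrapT => H; apply: Hn => x Xx; apply: contrapT => Hx; apply: H;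
    exists x; split => //; apply/negP);
  (have xs : x \notin s by apply: contra xn => xs; apply: memv_span);
  (have Fxs : free (x :: s) by
    apply: HX => [|u]; [rewrite /= xs Hu | rewrite inE => /orP [/eqP ->|/Hs]]);
  (have Hsz : (size (x :: s) <= \dim (fullv : {vspace vec R n}))%N by
    move: Fxs => /eqP <-; apply: dimvS; apply: subvf).
  simpl in Hsz; lia.
apply: (IH (x :: s)) => //=.
- lia.
- by rewrite xs Hu.
- by move=> u; rewrite inE => /orP [/eqP ->|/Hs].
Qed.

End Aux.
Unset Implicit Arguments.

Theorem lemmaA1 (R : realType) (n : nat) (S : set (aff R n))
  (C : set (vec R n)) (J : set (aff R n)) :
  affine_root_system setT S ->
  chamber setT S C ->
  J `<=` basis_of_chamber setT S C ->
  lin_indep (grads J) ->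
  exists CJ : set (vec R n),
    chamber (E_J J) (restr_sys S J) CJ /\
    J `<=` basis_of_chamber (E_J J) (restr_sys S J) CJ.
Proof.
move=> HS [x0 Rx0 ->] HJ HJi.
have [s [Fs sX Xs]] := exists_basis HJi.
pose P := Px s.
have EJ_iff : forall y, E_J J y <-> y \in vector.span s.
  move=> y; split.
    move=> [t [Ht Hy]].
    have : (vector.span t <= vector.span s)%VS.
      by apply/span_subvP => u /Ht /Xs.
    by move/subvP; apply.
  by move=> Hy; exists s; split => // u /sX.
have KL : forall a : aff R n, span_set (grads J) a.1 ->
    forall x, aeval a (P x) = aeval a x.
  by move=> a Ha x; rewrite /aeval /P (Px_dot Fs) //; apply/EJ_iff.
have Pcont : continuous P := @Px_cont _ _ s.
set CJ := connected_component (regular_set (E_J J) (restr_sys S J)) (P x0).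
exists CJ.
have Rreg : forall y, regular_set setT S y ->
    regular_set (E_J J) (restr_sys S J) (P y).
  move=> y [_ Hy]; split; first by apply/EJ_iff; apply: Px_in.
  move=> [a [Sa Ha] H0]; apply: Hy; exists a => //; by rewrite -(KL a Ha).
have PC : P @` connected_component (regular_set setT S) x0 `<=` CJ.
  apply: connected_component_max.
  - by exists x0 => //; exact: connected_component_refl.
  - move=> _ [y Hy <-]; apply: Rreg; exact: connected_component_sub Hy.
  - apply: connected_continuous_connected;
      [exact: component_connected | exact: continuous_subspaceT].
split; first by exists (P x0); [apply: Rreg|].
move=> a Ja; have [Sa [xw [_ xw0 [e e0 He]]] Hpos Hhalf] := HJ a Ja.
have Ga : span_set (grads J) a.1.
  exists [:: a.1]; split.
    by move=> u; rewrite inE => /eqP ->; exists a.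
  by apply: memv_span; rewrite inE.
split.
- by split.
- exists (P xw); split.
  + by apply/EJ_iff; exact: Px_in.
  + by rewrite KL.
  + exists e => // y Ey ay0 By.
    pose y' := (y + (xw - P xw))%R.
    have Py' : P y' = y.
      rewrite /y' /P PxD PxB (Px_id Fs (Px_in s xw)) subrr addr0.
      by apply: Px_id => //; apply/EJ_iff.
    have Cy' : closure (connected_component (regular_set setT S) x0) y'.
      apply: He => //.
        move: ay0; rewrite /aeval /y' dotD dotB.
        have -> : dot a.1 (P xw) = dot a.1 xw.
          by rewrite /P (Px_dot Fs) //; apply/EJ_iff.
        by rewrite subrr addr0.
      move: By; rewrite -!ball_normE /ball_ /y'.
      by rewrite /= opprD addrA opprB addrC addrA subrK.
    move=> B NB.
    have NB' : nbhs y' (P @^-1` B).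
      by rewrite -Py' in NB; exact: (Pcont y' B NB).
    have [c [Cc Bc]] := Cy' _ NB'.
    by exists (P c); split => //; apply: PC; exists c.
- move=> z CJz.
  have [_ Hz] := connected_component_sub CJz.
  have fz0 : aeval a z != 0%R.
    by apply/eqP => H0; apply: Hz; exists a => //; split.
  rewrite ltNge; apply/negP => fz.
  have fzn : (aeval a z < 0)%R by rewrite lt_neqAle fz0 fz.
  have fp : (0 < aeval a (P x0))%R.
    by rewrite KL //; apply: Hpos; exact: connected_component_refl.
  have : connected (aeval a @` CJ).
    apply: connected_continuous_connected;
      [exact: component_connected | exact/continuous_subspaceT/aeval_cont].
  move/connected_intervalP => HI.
  have [w CJw w0] : (aeval a @` CJ) 0%R.
    apply: (HI (aeval a z) (aeval a (P x0))).
    - by exists z.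
    - by exists (P x0) => //; apply: connected_component_refl; apply: Rreg.
    - by rewrite (ltW fzn) (ltW fp).
  have [_ Hw] := connected_component_sub CJw.
  by apply: Hw; exists a => //; split.
- by move=> [] /Hhalf.
Qed.
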